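(* Assume the observation space $\mathcal{X}$ is countable. Let $\hat\phi:\mathcal{X}\to[N]$ and $\hat g:[N]\times\mathcal{A}\times\mathcal{X}\to[0,1]$ satisfy \[ \mathbb{E}_{(x,a,x')\sim D}\bigl[\,|\hat g(\hat\phi(x),a,x')-g^{\star}(x,a,x')|\,\bigr]\le\Delta . \] Then \[ \Pr_{x_1,x_2\sim\mu\ \text{i.i.d.}}\bigl(\phi^{\star}(x_1)\ne\phi^{\star}(x_2)\ \wedge\ \hat\phi(x_1)=\hat\phi(x_2)\bigr)\ \le\ \frac{8|\mathcal{A}|^2\Delta}{\Gamma}. \]
   Context: Setting: a block MDP with finite action set $\mathcal{A}$, perfect decoder $\phi^{\star}:\mathcal{X}\to\mathcal{S}$ (emissions of distinct latent states have disjoint supports), first-step latent transition $T(\cdot\mid s,a)$, and initial latent state drawn from a distribution over a set $\mathcal{S}_1$ of $N$ initial states. Write $\mu(x)$ for the probability of the initial observation $x$, $T(x'\mid x,a)$ for the probability of the next observation $x'$ after action $a$ from initial observation $x$ (latent transition from $\phi^{\star}(x)$ times emission of $x'$), and $\rho(x')=\mathbb{E}_{x\sim\mu,a\sim\mathrm{Unif}(\mathcal{A})}[T(x'\mid x,a)]$. Define $D(x,a,x')=\frac{\mu(x)}{2|\mathcal{A}|}\{T(x'\mid x,a)+\rho(x')\}$ (a half-half mixture of real transitions and imposter transitions whose $x'$ is drawn independently) and $g^{\star}(x,a,x')=T(x'\mid x,a)/(T(x'\mid x,a)+\rho(x'))$. Margin assumption: for any two distinct initial states $s,\tilde s\in\mathcal{S}_1$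 and every $a\in\mathcal{A}$, $\|T(\cdot\mid s,a)-T(\cdot\mid\tilde s,a)\|_{\mathrm{TV}}\ge\Gamma$, with $\Gamma>0$. *)

(* Defs.v *)
From mathcomp Require Import all_boot all_order all_algebra.
From mathcomp Require Import all_classical all_reals all_analysis.

Set Implicit Arguments.
Unset Strict Implicit.
Unset Printing Implicit Defensive.

Import Order.TTheory GRing.Theory Num.Theory.
Local Open Scope ring_scope.
Local Open Scope classical_set_scope.

Definition is_distr (R : realType) (T : choiceType) (p : T -> R) : Prop :=
  (forall t, 0 <= p t) /\ (\esum_(t in [set: T]) (p t)%:E = 1)%E.

Definition tv_dist (R : realType) (T : choiceType) (p p' : T -> R) : \bar R :=
  ((2%:R^-1)%:E * \esum_(t in [set: T]) (`|p t - p' t|)%:E)%E.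

Section BlockMDP.
Variables (R : realType) (X S : countType) (A : finType).
(* phistar : perfect decoder; mu0 : initial latent distribution;
   q s : emission distribution of latent state s;
   Tl s a : first-step latent transition. *)
Variables (phistar : X -> S) (mu0 : S -> R) (q : S -> X -> R)
          (Tl : S -> A -> S -> R).

(* probability of the initial observation x (emission supports are disjoint,
   so only the latent state phistar x contributes) *)
Definition mu_obs (x : X) : R := mu0 (phistar x) * q (phistar x) x.

Definition T_obs (x : X) (a : A) (x' : X) : R :=
  Tl (phistar x) a (phistar x') * q (phistar x') x'.

Definition rho_obs (x' : X) : R :=
  fine (\esum_(xa in [set: X * A])
          (mu_obs xa.1 * #|A|%:R^-1 * T_obs xa.1 xa.2 x')%:E)%E.

Definition D_dist (x : X) (a : A) (x' : X) : R :=
  mu_obs x / (2 * #|A|%:R) * (T_obs x a x' + rho_obs x').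

Definition gstar (x : X) (a : A) (x' : X) : R :=
  T_obs x a x' / (T_obs x a x' + rho_obs x').

Definition expected_err (N : nat) (phihat : X -> 'I_N)
  (ghat : 'I_N -> A -> X -> R) : \bar R :=
  (\esum_(t in [set: X * A * X])
     (D_dist t.1.1 t.1.2 t.2 *
      `|ghat (phihat t.1.1) t.1.2 t.2 - gstar t.1.1 t.1.2 t.2|)%:E)%E.

Definition merge_prob (N : nat) (phihat : X -> 'I_N) : \bar R :=
  (\esum_(p in [set p : X * X | phistar p.1 <> phistar p.2 /\
                                 phihat p.1 = phihat p.2])
     (mu_obs p.1 * mu_obs p.2)%:E)%E.

End BlockMDP.

(* Main.v *)
Require Import Defs.
From mathcomp Require Import all_boot all_order all_algebra.
From mathcomp Require Import all_classical all_reals all_analysis.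
From mathcomp Require Import ring lra.
Import Order.TTheory GRing.Theory Num.Theory.
Local Open Scope ring_scope.
Local Open Scope classical_set_scope.
Local Open Scope ereal_scope.

Lemma esumZl (R : realType) (T : choiceType) (I : set T) (a : T -> \bar R) (r : R) :
  (0 <= r)%R -> (forall i, I i -> 0 <= a i) ->
  \esum_(i in I) (r%:E * a i) = r%:E * \esum_(i in I) a i.
Proof.
move=> r0 a0; rewrite /esum -ereal_supZl//; last first.
  by apply/set0P; exists 0; exists set0; [exact: fsets_set0| rewrite fsbig_set0].
congr ereal_sup; apply/seteqP; split => y /=.
- move=> [F [finF FI] <-]; exists (\sum_(x \in F) a x); first by exists F.
  rewrite !fsbig_finite// !big_seq ge0_sume_distrr// => z.
  by move=> zF; apply: a0; apply: FI; move: zF; rewrite in_fset_set// inE.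
- move=> [x [F [finF FI] <-] <-]; exists F => //.
  rewrite !fsbig_finite// !big_seq ge0_sume_distrr// => z.
  by move=> zF; apply: a0; apply: FI; move: zF; rewrite in_fset_set// inE.
Qed.

Lemma esum_sub (R : realType) (T : choiceType) (I J : set T) (a : T -> \bar R) :
  I `<=` J -> (forall i, J i -> 0 <= a i) ->
  \esum_(i in I) a i <= \esum_(i in J) a i.
Proof.
move=> IJ a0; rewrite (esum_mkcond I) (esum_mkcond J); apply: le_esum => i _.
case: ifPn => iI; first by rewrite ifT// inE; apply: IJ; rewrite -inE.
by case: ifPn => // /[!inE] /a0.
Qed.

Lemma esum_fubini (R : realType) (T1 T2 : choiceType) (f : T1 * T2 -> \bar R) :
  (forall p, 0 <= f p) ->
  \esum_(p in [set: T1 * T2]) f p = \esum_(x in [set: T1]) \esum_(y in [set: T2]) f (x, y).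
Proof.
move=> f0; rewrite (@esum_esum _ _ _ setT (fun=> setT) (fun x y => f (x, y)))//.
have -> : [set: T1] `*`` (fun=> [set: T2]) = [set: T1 * T2] by apply/seteqP; split.
by apply: eq_esum => -[].
Qed.

Lemma esum_swap (R : realType) (T1 T2 : choiceType) (f : T1 -> T2 -> \bar R) :
  (forall x y, 0 <= f x y) ->
  \esum_(x in [set: T1]) \esum_(y in [set: T2]) f x y =
  \esum_(y in [set: T2]) \esum_(x in [set: T1]) f x y.
Proof.
move=> f0; rewrite -(@esum_fubini _ _ _ (fun p => f p.1 p.2)) -?(@esum_fubini _ _ _ (fun p => f p.2 p.1));
  try by move=> ?.
rewrite (reindex_esum [set: T2 * T1] [set: T1 * T2] (fun p => (p.2, p.1))) //.
split => //.
- by move=> [x y] [x' y'] _ _ [-> ->].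
- by move=> [x y] _; exists (y, x).
Qed.

Lemma esum_single (R : realType) (T : choiceType) (f : T -> \bar R) (t : T) :
  (forall y, y <> t -> f y = 0) -> 0 <= f t ->
  \esum_(y in [set: T]) f y = f t.
Proof.
move=> f0 ft; rewrite (esumID [set t])//; last first.
  by move=> y _; by have [->|/eqP/f0 ->] := eqVneq y t.
rewrite setTI esum_set1// esum1 ?adde0// => y [_ /= ?]; exact: f0.
Qed.

Lemma esum_cst_fin (R : realType) (A : finType) (c : R) :
  (0 <= c)%R -> \esum_(a in [set: A]) c%:E = (#|A|%:R * c)%:E.
Proof.
move=> c0; rewrite esum_fset//; last first.
  by apply: finite_finset.
rewrite (fsbigE (enum A)) ?enum_uniq//; last by move=> i _; rewrite mem_enum.
under eq_bigl do rewrite in_setT.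
rewrite sumEFin big_const_seq /= count_predT -cardE.
by rewrite iter_addr_0 mulr_natl.
Qed.

Lemma distr_le1 (R : realType) (T : choiceType) (p : T -> R) t :
  is_distr p -> (p t <= 1)%R.
Proof.
move=> [p0 p1]; rewrite -lee_fin -p1 -(@esum_set1 _ _ t (fun t => (p t)%:E)) ?lee_fin//.
by apply: esum_sub => // ? _; rewrite lee_fin.
Qed.

Lemma esum_ge1 (R : realType) (T : choiceType) (a : T -> \bar R) t :
  (forall i, 0 <= a i) -> a t <= \esum_(i in [set: T]) a i.
Proof.
move=> a0; rewrite -(@esum_set1 _ _ t a)//.
by apply: esum_sub => // ? _.
Qed.

Local Close Scope ereal_scope.

Lemma pw_pos (R : realType) (m1 m2 t1 t2 r h : R) :
  0 <= m1 -> 0 <= m2 -> 0 <= t1 -> 0 <= t2 -> 0 < r ->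
  m1 * m2 * `|t1 - t2| <=
  m1 * (t1 + r) * `|h - t1 / (t1 + r)| * (m2 * (t2 + r) / r) +
  m2 * (t2 + r) * `|h - t2 / (t2 + r)| * (m1 * (t1 + r) / r).
Proof.
move=> m10 m20 t10 t20 r0.
have u10 : 0 < t1 + r by rewrite ltr_wpDl.
have u20 : 0 < t2 + r by rewrite ltr_wpDl.
set c := (t1 + r) * (t2 + r) / r.
have c0 : 0 <= c by rewrite /c !mulr_ge0 // ?invr_ge0 ltW.
have E : t1 - t2 = c * (t1 / (t1 + r) - t2 / (t2 + r)).
  rewrite /c; field.
  by rewrite !gt_eqF.
rewrite E normrM (ger0_norm c0).
apply: (@le_trans _ _ (m1 * m2 * (c * (`|h - t1 / (t1 + r)| + `|h - t2 / (t2 + r)|)))).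
  rewrite ler_wpM2l ?mulr_ge0 // ler_wpM2l //.
  by rewrite (le_trans (ler_distD h _ _)) // distrC.
rewrite le_eqVlt; apply/orP; left; apply/eqP; rewrite /c; field.
by rewrite gt_eqF.
Qed.

Lemma pw_zero (R : realType) (m1 m2 t1 t2 z : R) :
  0 <= m1 -> 0 <= m2 -> m1 * t1 = 0 -> m2 * t2 = 0 -> 0 <= z ->
  m1 * m2 * `|t1 - t2| <= z.
Proof.
move=> m10 m20 h1 h2 z0.
rewrite -(ger0_norm (mulr_ge0 m10 m20)) -normrM mulrBr.
have -> : m1 * m2 * t1 = 0 by rewrite mulrAC h1 mul0r.
have -> : m1 * m2 * t2 = 0 by rewrite -mulrA h2 mulr0.
by rewrite subrr normr0.
Qed.

Theorem lemma10 (R : realType) (X S : countType) (A : finType) (N : nat)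
  (phistar : X -> S) (S1 : seq S) (mu0 : S -> R) (q : S -> X -> R)
  (Tl : S -> A -> S -> R) (Gamma Delta : R)
  (phihat : X -> 'I_N) (ghat : 'I_N -> A -> X -> R) :
  (0 < #|A|)%N ->
  uniq S1 -> size S1 = N ->
  is_distr mu0 -> (forall s, mu0 s != 0 -> s \in S1) ->
  (forall s, is_distr (q s)) ->
  (forall s x, q s x != 0 -> phistar x = s) ->
  (forall s a, is_distr (Tl s a)) ->
  0 < Gamma ->
  (forall s s' a, s \in S1 -> s' \in S1 -> s != s' ->
     (Gamma%:E <= tv_dist (Tl s a) (Tl s' a))%E) ->
  (forall i a x, 0 <= ghat i a x <= 1) ->
  (expected_err phistar mu0 q Tl phihat ghat <= Delta%:E)%E ->
  (merge_prob phistar mu0 q phihat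
     <= (8 * #|A|%:R ^+ 2 * Delta / Gamma)%:E)%E.
Proof.
move=> Apos uS1 szS1 [m0 m1] mS1 qd qsupp Tld G0 HG gh Herr.
set K := (#|A|%:R : R).
have K1 : (1 <= K)%R by rewrite /K ler1n.
have K0 : (0 < K)%R by rewrite /K ltr0n.
have q0 s x : (0 <= q s x)%R by case: (qd s).
have Tl0 s a s' : (0 <= Tl s a s')%R by case: (Tld s a).
set mu := mu_obs phistar mu0 q.
set T := T_obs phistar q Tl.
set rho := rho_obs phistar mu0 q Tl.
set g := gstar phistar mu0 q Tl.
have mu_ge0 x : (0 <= mu x)%R by rewrite /mu /mu_obs mulr_ge0.
have T_ge0 x a x' : (0 <= T x a x')%R by rewrite /T /T_obs mulr_ge0.
have T_le1 x a x' : (T x a x' <= 1)%R.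
  by rewrite /T /T_obs mulr_ile1 // distr_le1.
have marg (f : S -> R) : (forall s, 0 <= f s) ->
  (\esum_(x in [set: X]) (f (phistar x) * q (phistar x) x)%:E =
   \esum_(s in [set: S]) (f s)%:E)%E.
  move=> f0.
  transitivity (\esum_(s in [set: S]) \esum_(x in [set: X]) ((f s)%:E * (q s x)%:E))%E; last first.
    apply: eq_esum => s _; rewrite esumZl//; last by move=> x _; rewrite lee_fin.
    by case: (qd s) => _ ->; rewrite mule1.
  rewrite esum_swap; last by move=> s x; rewrite -EFinM lee_fin mulr_ge0.
  apply: eq_esum => x _; rewrite (@esum_single _ _ _ (phistar x)) ?EFinM//.
    move=> s sx; apply/eqP; rewrite mule_eq0; apply/orP; right.
    apply/eqP; congr EFin; apply: contra_notP sx => /eqP /qsupp ->//.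
  by rewrite -EFinM lee_fin mulr_ge0.
have mu_sum : (\esum_(x in [set: X]) (mu x)%:E = 1)%E.
  by rewrite -m1 -marg.
pose E x' := (\esum_(xa in [set: X * A]) (mu xa.1 * K^-1 * T xa.1 xa.2 x')%:E)%E.
have Kinv0 : (0 <= K^-1)%R by rewrite invr_ge0 ltW.
have E_ge0 x' : (0 <= E x')%E.
  by apply: esum_ge0 => xa _; rewrite lee_fin !mulr_ge0.
have Efub x' : E x' = (\esum_(x in [set: X]) \esum_(a in [set: A]) (mu x * K^-1 * T x a x')%:E)%E.
  by rewrite /E esum_fubini // => xa; rewrite lee_fin !mulr_ge0.
have Ele1 x' : (E x' <= 1)%E.
  rewrite Efub -mu_sum; apply: le_esum => x _.
  apply: (@le_trans _ _ (\esum_(a in [set: A]) (mu x * K^-1)%:E)%E).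
    by apply: le_esum => a _; rewrite lee_fin ler_piMr ?mulr_ge0.
  by rewrite esum_cst_fin ?mulr_ge0// lee_fin /K mulrCA divff ?mulr1 // -/K gt_eqF.
have rhoE x' : (rho x')%:E = E x'.
  rewrite /rho /rho_obs -/K fineK//.
  by rewrite ge0_fin_numE ?E_ge0// (le_lt_trans (Ele1 x')) ?ltry.
have rho_ge0 x' : (0 <= rho x')%R by rewrite -lee_fin rhoE.
have key a x' : (\esum_(x in [set: X]) (mu x * T x a x')%:E <= (K * rho x')%:E)%E.
  rewrite EFinM rhoE Efub -esumZl//; last first.
    by move=> x _; apply: esum_ge0 => ? _; rewrite lee_fin !mulr_ge0.
  apply: le_esum => x _.
  apply: (@le_trans _ _ (K%:E * (mu x * K^-1 * T x a x')%:E)%E).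
    rewrite -EFinM lee_fin le_eqVlt; apply/orP; left; apply/eqP.
    by field; rewrite gt_eqF.
  rewrite lee_pmul2l ?lee_fin//.
  rewrite -(@esum_set1 _ _ a (fun a => (mu x * K^-1 * T x a x')%:E)) ?lee_fin ?mulr_ge0//.
  by apply: esum_sub => // ? _; rewrite lee_fin !mulr_ge0.
have rho0T x a x' : rho x' = 0 -> mu x * T x a x' = 0.
  move=> r0; apply/eqP; rewrite eq_le mulr_ge0 // andbT -lee_fin.
  apply: (@le_trans _ _ (\esum_(y in [set: X]) (mu y * T y a x')%:E)%E).
    by apply: (@esum_ge1 _ _ (fun y => (mu y * T y a x')%:E)) => ?; rewrite lee_fin mulr_ge0.
  by rewrite (le_trans (key a x')) // r0 mulr0.
pose e x a x' := mu x * (T x a x' + rho x') * `|ghat (phihat x) a x' - g x a x'|.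
pose v x a x' := mu x * (T x a x' + rho x') / rho x'.
have e_ge0 x a x' : (0 <= e x a x')%R by rewrite /e !mulr_ge0 // addr_ge0.
have v_ge0 x a x' : (0 <= v x a x')%R by rewrite /v !mulr_ge0 // ?addr_ge0 // invr_ge0.
have vsum a x' : (\esum_(x in [set: X]) (v x a x')%:E <= (K + 1)%:E)%E.
  have [r0|rn0] := eqVneq (rho x') 0.
    rewrite esum1; first by rewrite lee_fin addr_ge0 // ltW.
    by move=> x _; rewrite /v r0 invr0 mulr0.
  have rpos : (0 < rho x')%R by rewrite lt_neqAle eq_sym rn0 rho_ge0.
  rewrite (@eq_esum _ _ _ _ (fun x => ((rho x')^-1%:E * (mu x * T x a x')%:E + (mu x)%:E)%E)); last first.
    move=> x _; rewrite -EFinM -EFinD /v; congr EFin.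
    by field; rewrite gt_eqF.
  rewrite esumD; last first.
  - by move=> x _; rewrite lee_fin.
  - by move=> x _; rewrite -EFinM lee_fin !mulr_ge0 // invr_ge0.
  rewrite esumZl ?invr_ge0 //; last by move=> x _; rewrite lee_fin mulr_ge0.
  rewrite mu_sum EFinD leeD2r //.
  apply: (le_trans (lee_wpmul2l _ (key a x'))); first by rewrite lee_fin invr_ge0.
  by rewrite -EFinM lee_fin mulrCA mulVf ?mulr1 // gt_eqF.
have pw x1 x2 a x' : phihat x1 = phihat x2 ->
  (mu x1 * mu x2 * `|T x1 a x' - T x2 a x'| <=
   e x1 a x' * v x2 a x' + e x2 a x' * v x1 a x')%R.
  move=> ph.
  have [r0|rn0] := eqVneq (rho x') 0.
    by apply: pw_zero; rewrite ?rho0T // addr_ge0 // mulr_ge0.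
  have rpos : (0 < rho x')%R by rewrite lt_neqAle eq_sym rn0 rho_ge0.
  rewrite /e /v /g /gstar -/T -/rho ph.
  exact: pw_pos.
have tv x1 x2 a : mu0 (phistar x1) != 0 -> mu0 (phistar x2) != 0 ->
    phistar x1 != phistar x2 ->
  ((2 * Gamma)%:E <= \esum_(x' in [set: X]) (`|T x1 a x' - T x2 a x'|)%:E)%E.
  move=> h1 h2 ne.
  rewrite (@eq_esum _ _ _ _ (fun x' => (`|Tl (phistar x1) a (phistar x') - Tl (phistar x2) a (phistar x')| * q (phistar x') x')%:E)); last first.
    by move=> x' _; rewrite /T /T_obs -mulrBl normrM (ger0_norm (q0 _ _)).
  rewrite (marg (fun s' => `|Tl (phistar x1) a s' - Tl (phistar x2) a s'|)) //.
  have := HG _ _ a (mS1 _ h1) (mS1 _ h2) ne; rewrite /tv_dist => H.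
  rewrite EFinM; apply: (le_trans (lee_wpmul2l (x:=2%:E) _ H)); first by rewrite lee_fin.
  by rewrite muleA -EFinM mulfV ?mul1e // pnatr_eq0.
have mu_ne x : mu x != 0 -> mu0 (phistar x) != 0.
  by apply: contraNneq => h; rewrite /mu /mu_obs h mul0r.
pose Rt p a x' := (e p.1 a x' * v p.2 a x' + e p.2 a x' * v p.1 a x')%R.
have Rt_ge0 p a x' : (0 <= Rt p a x')%R by rewrite /Rt addr_ge0 // mulr_ge0.
have step2 p : phistar p.1 <> phistar p.2 -> phihat p.1 = phihat p.2 ->
  ((2 * K * Gamma * (mu p.1 * mu p.2))%:E <=
   \esum_(a in [set: A]) \esum_(x' in [set: X]) (Rt p a x')%:E)%E.
  case: p => x1 x2 /= ne ph.
  apply: (@le_trans _ _ (\esum_(a in [set: A]) \esum_(x' in [set: X])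
      (mu x1 * mu x2 * `|T x1 a x' - T x2 a x'|)%:E)%E); last first.
    by apply: le_esum => a _; apply: le_esum => x' _; rewrite lee_fin pw.
  have [m0'|mn0] := eqVneq (mu x1 * mu x2) 0.
    rewrite m0' mulr0; apply: esum_ge0 => a _; apply: esum_ge0 => x' _.
    by rewrite lee_fin !mulr_ge0.
  have [h1 h2] : mu x1 != 0 /\ mu x2 != 0.
    by move: mn0; rewrite mulf_eq0 negb_or => /andP[].
  rewrite (@eq_esum _ _ _ _ (fun a => ((mu x1 * mu x2)%:E *
      \esum_(x' in [set: X]) (`|T x1 a x' - T x2 a x'|)%:E)%E)); last first.
    by move=> a _; rewrite -esumZl ?mulr_ge0 //.
  apply: (@le_trans _ _ (\esum_(a in [set: A]) (mu x1 * mu x2 * (2 * Gamma))%:E)%E).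
    rewrite esum_cst_fin; last by rewrite !mulr_ge0 // ltW.
    rewrite lee_fin -/K.
    by rewrite le_eqVlt; apply/orP; left; apply/eqP; ring.
  apply: le_esum => a _; rewrite EFinM lee_wpmul2l ?lee_fin ?mulr_ge0 //.
  by apply: tv; rewrite ?mu_ne //; apply/eqP.
have s5 a x' : (\esum_(p in [set: X * X]) (Rt p a x')%:E <=
    (2 * (K + 1))%:E * \esum_(x in [set: X]) (e x a x')%:E)%E.
  have prodb : (\esum_(x1 in [set: X]) \esum_(x2 in [set: X]) (e x1 a x' * v x2 a x')%:E
      <= (K + 1)%:E * \esum_(x in [set: X]) (e x a x')%:E)%E.
    rewrite -esumZl; [|by rewrite addr_ge0 // ltW|by move=> *; rewrite lee_fin].
    apply: le_esum => x1 _.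
    rewrite (@eq_esum _ _ _ _ (fun x2 => ((e x1 a x')%:E * (v x2 a x')%:E)%E)); last first.
      by move=> *; rewrite EFinM.
    rewrite esumZl //; last by move=> *; rewrite lee_fin.
    by rewrite [X in (_ <= X)%E]muleC lee_wpmul2l ?lee_fin.
  rewrite /Rt (@eq_esum _ _ _ _ (fun p => ((e p.1 a x' * v p.2 a x')%:E + (e p.2 a x' * v p.1 a x')%:E)%E)); last first.
    by move=> *; rewrite EFinD.
  rewrite esumD; last 2 first.
  - by move=> *; rewrite lee_fin mulr_ge0.
  - by move=> *; rewrite lee_fin mulr_ge0.
  rewrite esum_fubini; last by move=> *; rewrite lee_fin mulr_ge0.
  rewrite [X in (_ + X <= _)%E]esum_fubini; last by move=> *; rewrite lee_fin mulr_ge0.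
  rewrite [X in (_ + X <= _)%E]esum_swap /=; last by move=> *; rewrite lee_fin mulr_ge0.
  apply: (le_trans (leeD prodb prodb)).
  rewrite -ge0_muleDl; [|by rewrite lee_fin addr_ge0 // ltW|by rewrite lee_fin addr_ge0 // ltW].
  rewrite -EFinD.
  by rewrite le_eqVlt; apply/orP; left; apply/eqP; congr (_%:E * _)%E; ring.
have D_ge0 x a x' : (0 <= D_dist phistar mu0 q Tl x a x')%R.
  by rewrite /D_dist -/mu -/T -/rho !mulr_ge0 ?invr_ge0 ?addr_ge0 ?mulr_ge0 // ltW.
have s6 : (\esum_(a in [set: A]) \esum_(x' in [set: X]) \esum_(x in [set: X]) (e x a x')%:E =
   (2 * K)%:E * expected_err phistar mu0 q Tl phihat ghat)%E.
  rewrite /expected_err esum_fubini; last by move=> *; rewrite lee_fin mulr_ge0.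
  rewrite esum_fubini /=; last first.
    by move=> *; apply: esum_ge0 => *; rewrite lee_fin mulr_ge0.
  rewrite (@eq_esum _ _ _ _ (fun a => \esum_(x in [set: X]) \esum_(x' in [set: X]) (e x a x')%:E)%E); last first.
    by move=> a _; rewrite esum_swap // => *; rewrite lee_fin.
  rewrite esum_swap; last by move=> *; apply: esum_ge0 => *; rewrite lee_fin.
  have K2 : (0 <= 2 * K)%R by rewrite mulr_ge0 // ltW.
  rewrite -esumZl //; last by move=> *; apply: esum_ge0 => *; apply: esum_ge0 => *; rewrite lee_fin mulr_ge0.
  apply: eq_esum => x _.
  rewrite -esumZl //; last by move=> *; apply: esum_ge0 => *; rewrite lee_fin mulr_ge0.
  apply: eq_esum => a _.
  rewrite -esumZl //; last by move=> *; rewrite lee_fin mulr_ge0.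
  apply: eq_esum => x' _.
  rewrite -EFinM; congr EFin.
  rewrite /e /D_dist -/mu -/T -/rho -/g -/K.
  by field; rewrite gt_eqF.
have Err0 : (0 <= expected_err phistar mu0 q Tl phihat ghat)%E.
  by apply: esum_ge0 => *; rewrite lee_fin mulr_ge0.
have Delta0 : (0 <= Delta)%R by rewrite -lee_fin (le_trans Err0 Herr).
have KG0 : (0 < 2 * K * Gamma)%R by rewrite !mulr_gt0.
rewrite /merge_prob -/mu.
rewrite -(@lee_pmul2l _ (2 * K * Gamma)%:E) ?lte_fin //.
apply: (@le_trans _ _ ((2 * (K + 1))%:E * ((2 * K)%:E * Delta%:E))%E); last first.
  rewrite -!EFinM lee_fin.
  have -> : (2 * K * Gamma * (8 * K ^+ 2 * Delta / Gamma) = 16 * K ^+ 3 * Delta)%R.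
    by field; rewrite gt_eqF.
  have P : (0 <= 4 * K * Delta * ((K - 1) * (4 * K + 3) + 2))%R.
    apply: mulr_ge0; first by rewrite !mulr_ge0 // ltW.
    apply: addr_ge0 => //; apply: mulr_ge0; first by rewrite subr_ge0.
    by rewrite addr_ge0 // mulr_ge0 // ltW.
  nra.
rewrite -esumZl; [|by rewrite ltW|by move=> *; rewrite lee_fin mulr_ge0].
apply: (@le_trans _ _ (\esum_(p in [set: X * X]) \esum_(a in [set: A])
    \esum_(x' in [set: X]) (Rt p a x')%:E)%E).
  apply: (@le_trans _ _ (\esum_(p in [set p : X * X | phistar p.1 <> phistar p.2 /\
                                 phihat p.1 = phihat p.2]) \esum_(a in [set: A])
    \esum_(x' in [set: X]) (Rt p a x')%:E)%E).
    apply: le_esum => p /= [ne ph]; rewrite -EFinM; exact: step2.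
  by apply: esum_sub => // p _; apply: esum_ge0 => *; apply: esum_ge0 => *; rewrite lee_fin.
rewrite esum_swap; last by move=> *; apply: esum_ge0 => *; rewrite lee_fin.
rewrite (@eq_esum _ _ _ _ (fun a => \esum_(x' in [set: X]) \esum_(p in [set: X * X]) (Rt p a x')%:E)%E); last first.
  by move=> a _; rewrite esum_swap // => *; rewrite lee_fin.
apply: (@le_trans _ _ (\esum_(a in [set: A]) \esum_(x' in [set: X])
    ((2 * (K + 1))%:E * \esum_(x in [set: X]) (e x a x')%:E))%E).
  by apply: le_esum => a _; apply: le_esum => x' _; exact: s5.
have K3 : (0 <= 2 * (K + 1))%R by rewrite mulr_ge0 // addr_ge0 // ltW.
rewrite (@eq_esum _ _ _ _ (fun a => (2 * (K + 1))%:E * \esum_(x' in [set: X]) \esum_(x in [set: X]) (e x a x')%:E)%E); last first.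
  move=> a _; rewrite esumZl //.
  by move=> *; apply: esum_ge0 => *; rewrite lee_fin.
rewrite esumZl //; last by move=> *; apply: esum_ge0 => *; apply: esum_ge0 => *; rewrite lee_fin.
rewrite s6; apply: lee_wpmul2l; first by rewrite lee_fin.
by apply: lee_wpmul2l => //; rewrite lee_fin mulr_ge0 // ltW.
Qed.
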